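(* Let $V$ be a finite-dimensional complex vector space and $R(z)\in\mathrm{End}(V\otimes V)$, $z\in\mathbb{C}$, a family of operators satisfying $R(u)_{12}R(u+v)_{23}R(v)_{12}=R(v)_{23}R(u+v)_{12}R(u)_{23}$ on $V^{\otimes3}$ for all $u,v\in\mathbb{C}$. If $R(0)=I\otimes I$, then for each $z\in\mathbb{C}$ there is a scalar $c(z)\in\mathbb{C}$ with $R(z)R(-z)=R(-z)R(z)=c(z)\,I\otimes I$. In particular, if $R(z)$ is not an isomorphism, then $R(z)R(-z)=0=R(-z)R(z)$.
   Context: $I$ denotes the identity on $V$; for $A\in\mathrm{End}(V\otimes V)$, $A_{12}=A\otimes I$ and $A_{23}=I\otimes A$ as operators on $V^{\otimes3}$. *)

(* Defs.v *)
From HB Require Import structures.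
From mathcomp Require Import all_boot all_order all_algebra.
From mathcomp Require Import reals.
From mathcomp.real_closed Require Import complex mxtens.
Set Implicit Arguments. Unset Strict Implicit. Unset Printing Implicit Defensive.
Import Order.TTheory GRing.Theory Num.Theory.
Local Open Scope ring_scope.

(* V = K^n with K a field; V (x) V = K^(n*n), V (x) V (x) V = K^(n*n*n),
   with the Kronecker (mxtens) identification of tensor bases. *)

Definition op12 (K : nzRingType) (n : nat) (A : 'M[K]_(n * n)) : 'M[K]_(n * n * n) :=
  A *t (1%:M : 'M[K]_n).

(* A_23 = I (x) A on V^{(x)3}, cast from n*(n*n) to (n*n)*n (same basis order) *)
Definition op23 (K : nzRingType) (n : nat) (A : 'M[K]_(n * n)) : 'M[K]_(n * n * n) :=
  castmx (mulnA n n n, mulnA n n n) ((1%:M : 'M[K]_n) *t A).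

(* Main.v *)
Require Import Defs.
From HB Require Import structures.
From mathcomp Require Import all_boot all_order all_algebra.
From mathcomp Require Import reals.
From mathcomp.real_closed Require Import complex mxtens.
Import Order.TTheory GRing.Theory Num.Theory.
Local Open Scope ring_scope.
Local Open Scope complex_scope.

Section Aux.
Variable K : fieldType.

Lemma castmx1 m m' (e : m = m') : castmx (e, e) (1%:M : 'M[K]_m) = 1%:M.
Proof. by case: m' / e. Qed.

Lemma tens11 m p : (1%:M : 'M[K]_m) *t (1%:M : 'M[K]_p) = 1%:M.
Proof.
apply/matrixP=> i j.
case: (mxtens_indexP i)=> i0 i1; case: (mxtens_indexP j)=> j0 j1.
rewrite tensmxE !mxE.
rewrite (inj_eq (can_inj (@mxtens_indexK _ _))) xpair_eqE.
by case: (i0 == j0); case: (i1 == j1); rewrite ?mulr1 ?mulr0 ?mul0r.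
Qed.

Lemma op12_1 n : op12 (1%:M : 'M[K]_(n * n)) = 1%:M.
Proof. by rewrite /op12 tens11. Qed.

Lemma op23_1 n : op23 (1%:M : 'M[K]_(n * n)) = 1%:M.
Proof. by rewrite /op23 tens11 castmx1. Qed.

Lemma castmxM m m' (e : m = m') (M N : 'M[K]_m) :
  castmx (e, e) M *m castmx (e, e) N = castmx (e, e) (M *m N).
Proof. by case: m' / e. Qed.

Lemma op12_mul n (A B : 'M[K]_(n * n)) : op12 A *m op12 B = op12 (A *m B).
Proof. by rewrite /op12 tensmx_mul mulmx1. Qed.

Lemma op23_mul n (A B : 'M[K]_(n * n)) : op23 A *m op23 B = op23 (A *m B).
Proof.
by rewrite /op23 castmxM tensmx_mul mulmx1.
Qed.

Lemma idx_cast n (a b c : 'I_n) :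
  cast_ord (esym (mulnA n n n)) (mxtens_index (mxtens_index (a, b), c))
  = mxtens_index (a, mxtens_index (b, c)).
Proof. apply: val_inj => /=; rewrite mulnDl -mulnA addnA //. Qed.

Lemma L1 n (X Y : 'M[K]_(n * n)) : op12 X = op23 Y ->
  forall a b c a' b' c' : 'I_n,
  X (mxtens_index (a, b)) (mxtens_index (a', b')) * (c == c')%:R
  = (a == a')%:R * Y (mxtens_index (b, c)) (mxtens_index (b', c')).
Proof.
move=> H a b c a' b' c'.
have := congr1 (fun M : 'M[K]_(n * n * n) => M (mxtens_index (mxtens_index (a, b), c))
                           (mxtens_index (mxtens_index (a', b'), c'))) H.
rewrite /op12 /op23 castmxE /= !idx_cast !tensmxE !mxE => ->.
done.
Qed.

Lemma scal n (A B : 'M[K]_(n * n)) : op12 A = op23 B -> op12 B = op23 A ->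
  exists c, A = c%:M /\ B = c%:M.
Proof.
move=> H1 H2.
case: n A B H1 H2 => [|m] A B H1 H2.
  by exists 0; split; apply/matrixP => [[]].
have E1 := @L1 _ _ _ H1; have E2 := @L1 _ _ _ H2.
have hA : forall a b a' b' c : 'I_m.+1,
  A (mxtens_index (a, b)) (mxtens_index (a', b'))
  = (a == a')%:R * B (mxtens_index (b, c)) (mxtens_index (b', c)).
  by move=> a b a' b' c; rewrite -E1 eqxx mulr1.
have hB : forall a b a' b' c : 'I_m.+1,
  B (mxtens_index (a, b)) (mxtens_index (a', b'))
  = (a == a')%:R * A (mxtens_index (b, c)) (mxtens_index (b', c)).
  by move=> a b a' b' c; rewrite -E2 eqxx mulr1.
pose c0 := A (mxtens_index (ord0, ord0)) (mxtens_index (ord0, ord0)).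
have hA' : forall a b a' b' : 'I_m.+1,
  A (mxtens_index (a, b)) (mxtens_index (a', b'))
  = (a == a')%:R * (b == b')%:R * c0.
  move=> a b a' b'; rewrite (hA a b a' b' ord0) (hB b ord0 b' ord0 ord0).
  rewrite /c0 (hA ord0 ord0 ord0 ord0 ord0) (hB ord0 ord0 ord0 ord0 ord0).
  by rewrite eqxx !mul1r mulrA.
have hB' : forall a b a' b' : 'I_m.+1,
  B (mxtens_index (a, b)) (mxtens_index (a', b'))
  = (a == a')%:R * (b == b')%:R * c0.
  move=> a b a' b'; rewrite (hB a b a' b' ord0) (hA b ord0 b' ord0 ord0).
  rewrite /c0 (hA ord0 ord0 ord0 ord0 ord0) (hB ord0 ord0 ord0 ord0 ord0).
  by rewrite eqxx !mul1r mulrA.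
have sc : forall a b a' b' : 'I_m.+1,
  (c0%:M : 'M[K]_(m.+1 * m.+1)) (mxtens_index (a, b)) (mxtens_index (a', b'))
  = (a == a')%:R * (b == b')%:R * c0.
  move=> a b a' b'; rewrite !mxE (inj_eq (can_inj (@mxtens_indexK _ _))).
  rewrite xpair_eqE.
  by case: (a == a'); case: (b == b'); rewrite /= ?mul1r ?mul0r ?mulr1n ?mulr0n.
exists c0; split; apply/matrixP => i j;
  case: (mxtens_indexP i)=> i0 i1; case: (mxtens_indexP j)=> j0 j1;
  by rewrite sc ?hA' ?hB'.
Qed.

End Aux.

Theorem lemma2p3 (R : realType) (n : nat) (Rz : R[i] -> 'M[R[i]]_(n * n)) :
  (forall u v : R[i],
      op12 (Rz u) *m op23 (Rz (u + v)) *m op12 (Rz v)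
      = op23 (Rz v) *m op12 (Rz (u + v)) *m op23 (Rz u)) ->
  Rz 0 = 1%:M ->
  (forall z : R[i], exists c : R[i],
      Rz z *m Rz (- z) = c%:M /\ Rz (- z) *m Rz z = c%:M) /\
  (forall z : R[i], Rz z \notin unitmx ->
      Rz z *m Rz (- z) = 0 /\ Rz (- z) *m Rz z = 0).
Proof.
move=> YB R0.
have P1 : forall z : R[i], exists c : R[i],
      Rz z *m Rz (- z) = c%:M /\ Rz (- z) *m Rz z = c%:M.
  move=> z; apply: scal.
    have := YB z (- z); rewrite addrN R0 op23_1 op12_1 !mulmx1.
    by rewrite op12_mul op23_mul.
  have := YB (- z) z; rewrite addNr R0 op23_1 op12_1 !mulmx1.
  by rewrite op12_mul op23_mul.
split => // z nu.
have [c [h1 h2]] := P1 z.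
suff c0 : c = 0 by rewrite h1 h2 c0 raddf0.
apply/eqP; apply: contraNT nu => cn0.
have : Rz z *m Rz (- z) \in unitmx.
  by rewrite h1 unitmxE det_scalar unitfE expf_neq0.
by rewrite unitmx_mul => /andP [].
Qed.
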